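(* Consider the fading dirty paper channel over $\mathbb F_q$: at each channel use $\tau$ the receiver observes $(Y^{(\tau)},G^{(\tau)})$ with $Y^{(\tau)}=X^{(\tau)}+G^{(\tau)}\Theta^{(\tau)}$, where $X^{(\tau)}\in\mathbb F_q$ is the transmitted symbol, and $\Theta^{(\tau)},G^{(\tau)}$ are independent, uniform on $\mathbb F_q$, i.i.d. across channel uses and independent of the message; the whole sequence $\Theta^{[n]}$ is known to the transmitter in advance (non-causally) but not to the receiver, and $G^{[n]}$ is known to the receiver but not to the transmitter. Then the NS-assisted capacity is $C^{\mathrm{NS}}=\log_2 q$, while the classical capacity satisfies $C=o_q(\log_2 q)$, i.e. $C/\log_2q\to0$ as $q\to\infty$. In particular $C^{\mathrm{NS}}/C$ is unbounded as $q\to\infty$.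
   Context: A message $W$ is uniform on a finite set $\mathcal M$. A classical scheme over $n$ uses: a stochastic encoder $X^{[n]}=\phi(W,\Theta^{[n]})$ and stochastic decoder $\hat W=\psi(Y^{[n]},G^{[n]})$. A bipartite non-signaling (NS) box is a conditional pmf $\mathcal Z(u,v\mid s,t)$ (finite output alphabets) such that the marginal of $u$ does not depend on $t$ and the marginal of $v$ does not depend on $s$. An NS-assisted scheme: the transmitter inputs $(W,\Theta^{[n]})$ to the box and obtains $X^{[n]}$, the receiver inputs $(Y^{[n]},G^{[n]})$ and obtains $\hat W$. A rate $R$ is achievable if some sequence of schemes has $\Pr(\hat W\ne W)\to0$ and $\lim\frac1n\log_2|\mathcal M^{(n)}|\ge R$; the capacity is the supremum of achievable rates. *)

(* Defs.v *)
From HB Require Import structures.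
From mathcomp Require Import all_boot all_order all_algebra.
From mathcomp Require Import all_classical all_reals.
From mathcomp Require Import topology normedtype sequences exp.
Import numFieldNormedType.Exports.

Set Implicit Arguments.
Unset Strict Implicit.
Unset Printing Implicit Defensive.

Import Order.TTheory GRing.Theory Num.Theory.
Local Open Scope ring_scope.
Local Open Scope classical_set_scope.

Section FadingDPC.
Variables (R : realType) (F : finFieldType) (n m : nat).

Definition blk := {ffun 'I_n -> F}.

Definition chan_out (x g th : blk) : blk := [ffun i => x i + g i * th i].

Definition log2 (x : R) : R := ln x / ln 2.

(* classical scheme: stochastic encoder P(x^n | w, theta^n),
   stochastic decoder P(w_hat | y^n, g^n); message set 'I_m *)
Record cscheme := CScheme {
  enc : 'I_m -> blk -> blk -> R;   (* enc w th x *)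
  dec : blk -> blk -> 'I_m -> R;   (* dec y g w_hat *)
  enc_ge0 : forall w th x, 0 <= enc w th x;
  enc_sum1 : forall w th, \sum_(x : blk) enc w th x = 1;
  dec_ge0 : forall y g v, 0 <= dec y g v;
  dec_sum1 : forall y g, \sum_(v : 'I_m) dec y g v = 1 }.

(* error probability: W uniform on 'I_m, Theta^n and G^n i.i.d. uniform *)
Definition cerr (S : cscheme) : R :=
  (m%:R * (#|F| ^ (2 * n))%:R)^-1 *
  \sum_(w : 'I_m) \sum_(th : blk) \sum_(g : blk) \sum_(x : blk)
    \sum_(v : 'I_m | v != w) enc S w th x * dec S (chan_out x g th) g v.

(* bipartite non-signaling box Z(u, v | s, t) with
   s = (W, Theta^n), t = (Y^n, G^n), u = X^n, v = W_hat *)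
Record nsbox := NSBox {
  box : ('I_m * blk) -> (blk * blk) -> blk -> 'I_m -> R;
  box_ge0 : forall s t u v, 0 <= box s t u v;
  box_sum1 : forall s t, \sum_(u : blk) \sum_(v : 'I_m) box s t u v = 1;
  box_ns_u : forall s t t' u,
      \sum_(v : 'I_m) box s t u v = \sum_(v : 'I_m) box s t' u v;
  box_ns_v : forall s s' t v,
      \sum_(u : blk) box s t u v = \sum_(u : blk) box s' t u v }.

Definition nserr (Z : nsbox) : R :=
  (m%:R * (#|F| ^ (2 * n))%:R)^-1 *
  \sum_(w : 'I_m) \sum_(th : blk) \sum_(g : blk) \sum_(x : blk)
    \sum_(v : 'I_m | v != w) box Z (w, th) (chan_out x g th, g) x v.

End FadingDPC.

Arguments blk F n : clear implicits.

Definition rate {R : realType} (n m : nat) : R := log2 (m%:R : R) / n%:R.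

Definition c_achievable (R : realType) (F : finFieldType) (r : R) : Prop :=
  exists (m : nat -> nat) (S : forall n, cscheme R F n (m n)),
    (forall n, (0 < m n)%N) /\
    ((fun n => cerr (S n)) @ \oo --> (0 : R)) /\
    exists l : R, ((fun n => rate n (m n) : R) @ \oo --> l) /\ r <= l.

Definition ns_achievable (R : realType) (F : finFieldType) (r : R) : Prop :=
  exists (m : nat -> nat) (Z : forall n, nsbox R F n (m n)),
    (forall n, (0 < m n)%N) /\
    ((fun n => nserr (Z n)) @ \oo --> (0 : R)) /\
    exists l : R, ((fun n => rate n (m n) : R) @ \oo --> l) /\ r <= l.

Definition capacity (R : realType) (F : finFieldType) : R :=
  sup [set r : R | c_achievable F r].

Definition ns_capacity (R : realType) (F : finFieldType) : R :=
  sup [set r : R | ns_achievable F r].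

(* Main.v *)
Require Import Defs.
From HB Require Import structures.
From mathcomp Require Import all_boot all_order all_algebra.
From mathcomp Require Import all_classical all_reals.
From mathcomp Require Import topology normedtype sequences exp.
Import numFieldNormedType.Exports.
Import Order.TTheory GRing.Theory Num.Theory.
Local Open Scope ring_scope.
Local Open Scope classical_set_scope.
From mathcomp Require Import ring lra.
Set Implicit Arguments. Unset Strict Implicit.
Lemma log2_ler {R : realType} (x y : R) : 0 < x -> x <= y -> log2 x <= log2 y.
Proof.
move=> x0 xy; rewrite /log2 ler_pM2r; last by rewrite invr_gt0 ln_gt0 // ltr1n.
by rewrite ler_ln // posrE (lt_le_trans x0 xy).
Qed.
Lemma log2M {R : realType} (x y : R) : 0 < x -> 0 < y -> log2 (x * y) = log2 x + log2 y.
Proof. by move=> x0 y0; rewrite /log2 lnM ?posrE // mulrDl. Qed.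
Lemma log2X {R : realType} (x : R) k : 0 < x -> log2 (x ^+ k) = log2 x *+ k.
Proof. by move=> x0; rewrite /log2 lnXn // mulrnAl. Qed.
Lemma log2_2 {R : realType} : log2 (2 : R) = 1.
Proof. by rewrite /log2 divff // gt_eqF // ln_gt0 // ltr1n. Qed.

Lemma rate_bound {R : realType} (k : nat) (c : R) (mm : nat -> nat) (err : nat -> R) (l : R) :
  1 <= c -> (forall n, 0 < mm n)%N -> err @ \oo --> (0:R) ->
  (fun n => rate n (mm n) : R) @ \oo --> l ->
  (forall n, (1 - err n)^+k * (mm n)%:R <= c ^+ n) -> l <= log2 c.
Proof.
move=> c1 m0 errc ratec hb.
have c0 : 0 < c by apply: lt_le_trans c1.
apply/ler_addgt0Pr => d d0.
apply: (cvgr_to_le ratec).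
have h2 : (0:R) < 2 by [].
have k0 : (0:R) <= k%:R by [].
near=> n.
have en : `|err n| <= 2^-1 by near: n; apply: cvgr0_norm_le => //; rewrite invr_gt0.
have nn : (k%:R + 1) / d <= n%:R by near: n; apply: nbhs_infty_ger.
have n0 : (0:R) < n%:R by apply: lt_le_trans nn; rewrite divr_gt0 //; lra.
have mpos : (0:R) < (mm n)%:R by rewrite ltr0n.
have hm : (mm n)%:R <= 2 ^+ k * c ^+ n.
  have := hb n; have : 2^-1 <= 1 - err n.
    move: en; rewrite ler_norml => /andP[_ h]; lra.
  move=> h1 h2'.
  have h3 : (2^-1)^+k <= (1 - err n)^+k.
    by rewrite lerXn2r // ?nnegrE // ?invr_ge0 //; lra.
  have : (2^-1)^+k * (mm n)%:R <= c ^+ n.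
    apply: le_trans h2'; rewrite ler_wpM2r // ltW.
  move=> h.
  have e2 : (2 : R) ^+ k * (2^-1)^+k = 1.
    by rewrite -exprMn (_ : (2:R) / 2 = 1) ?expr1n //; lra.
  have := ler_wpM2l (ltW (exprn_gt0 k h2)) h.
  by rewrite mulrA e2 mul1r.
rewrite /rate.
have : log2 (mm n)%:R <= k%:R + log2 c *+ n.
  apply: le_trans (log2_ler mpos hm) _.
  rewrite log2M // ?exprn_gt0 // !log2X // log2_2.
  by [].
move=> hl; rewrite ler_pdivrMr //.
apply: le_trans hl _.
rewrite ler_pdivrMr // in nn.
rewrite -mulr_natr; nra.
Unshelve. all: by end_near.
Qed.
Section Gen.
Variable R : realFieldType.

Lemma CS (I : finType) (a b : I -> R) :
  (\sum_i a i * b i)^+2 <= (\sum_i a i ^+2) * (\sum_i b i ^+2).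
Proof.
set A := \sum_i a i ^+2; set B := \sum_i b i ^+2; set S := \sum_i a i * b i.
have A0 : 0 <= A by apply: sumr_ge0 => i _; exact: sqr_ge0.
have B0 : 0 <= B by apply: sumr_ge0 => i _; exact: sqr_ge0.
have [Ae0|Agt0] := eqVneq A 0.
  have ha : forall i, a i = 0.
    move=> i; apply/eqP; rewrite -sqrf_eq0; apply/eqP.
    by move/eqP: Ae0; rewrite psumr_eq0 => [/allP/(_ i (mem_index_enum i))/implyP/(_ isT)/eqP|j _]; [|exact: sqr_ge0].
  rewrite /S big1; last by move=> i _; rewrite ha mul0r.
  by rewrite expr0n /= Ae0 mul0r.
have Ap : 0 < A by rewrite lt_def Agt0 A0.
pose t := S / A.
have : 0 <= \sum_i (a i * t - b i)^+2 by apply: sumr_ge0 => i _; exact: sqr_ge0.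
have -> : \sum_i (a i * t - b i)^+2 = A * t^+2 - 2 * S * t + B.
  transitivity (\sum_i (t^+2 * a i ^+2 - (2 * t) * (a i * b i) + b i ^+2)).
    by apply: eq_bigr => i _; ring.
  rewrite big_split sumrB /= -!mulr_sumr /A /S /B; ring.
rewrite /t => h.
have : 0 <= B - S^+2 / A.
  suff -> : B - S^+2 / A = A * (S / A) ^+ 2 - 2 * S * (S / A) + B by [].
  by field; rewrite Agt0.
rewrite subr_ge0 ler_pdivrMr // mulrC //.
Qed.
Lemma sum_ind (T : finType) (a : T) (f : T -> R) : \sum_y ((a == y)%:R * f y) = f a.
Proof.
rewrite (bigD1 a) //= eqxx mul1r big1 ?addr0 // => y ya.
by rewrite eq_sym (negbTE ya) mul0r.
Qed.

Lemma sum_ind1 (T : finType) (a : T) : \sum_y ((y == a)%:R : R) = 1.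
Proof.
rewrite (bigD1 a) //= eqxx big1 ?addr0 // => y ya.
by rewrite (negbTE ya).
Qed.

Lemma term_le_sum (T : finType) (f : T -> R) j : (forall i, 0 <= f i) -> f j <= \sum_i f i.
Proof. by move=> h; rewrite (bigD1 j) //= lerDl sumr_ge0. Qed.

Lemma sum_cst (T : finType) (c : R) : \sum_(i : T) c = #|T|%:R * c.
Proof. by rewrite sumr_const mulr_natl. Qed.

Lemma ffun_eq_prod (I T : finType) (f1 f2 : {ffun I -> T}) :
  ((f1 == f2)%:R : R) = \prod_i ((f1 i == f2 i)%:R).
Proof.
have [->|ne] := eqVneq f1 f2.
  by rewrite big1 // => i _; rewrite eqxx.
have : ~~ [forall i, f1 i == f2 i].
  by apply: contra ne => /forallP h; apply/eqP/ffunP => i; apply/eqP.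
rewrite negb_forall => /existsP [i hi].
by rewrite (bigD1 i) //= (negbTE hi) mul0r.
Qed.
End Gen.

Section Chan.
Variables (R : realType) (F : finFieldType) (n m : nat).
Local Notation B := (blk F n).

Lemma card_blk : #|B| = (#|F| ^ n)%N.
Proof. by rewrite /blk card_ffun card_ord. Qed.

Lemma err_succ (P : 'I_m -> B -> B -> B -> 'I_m -> R) : (0 < m)%N ->
  (forall w th g, \sum_x \sum_v P w th g x v = 1) ->
  (m%:R * (#|F| ^ (2 * n))%:R)^-1 *
    (\sum_w \sum_th \sum_g \sum_x \sum_(v | v != w) P w th g x v) =
  1 - (m%:R * (#|F| ^ (2 * n))%:R)^-1 *
    (\sum_w \sum_th \sum_g \sum_x P w th g x w).
Proof.
move=> m0 hP.
have inner : forall w th g, \sum_x \sum_(v | v != w) P w th g x v =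
    1 - \sum_x P w th g x w.
  move=> w th g; rewrite -(hP w th g) -sumrB; apply: eq_bigr => x _.
  by rewrite [X in _ = X - _](bigD1 w) //= addrC addrK.
under eq_bigr do under eq_bigr do under eq_bigr do rewrite inner.
under eq_bigr => w _ do under eq_bigr => th _ do rewrite sumrB.
under eq_bigr => w _ do rewrite sumrB.
rewrite sumrB !sumr_const card_blk card_ord.
have Kpos : (0:R) < (m * #|F| ^ (2 * n))%:R.
  have q0 : (0 < #|F|)%N by apply/card_gt0P; exists 0.
  by rewrite ltr0n muln_gt0 m0 expn_gt0 q0.
have -> : ((#|F| ^ n)%:R *+ #|F| ^ n *+ m : R) = m%:R * (#|F| ^ (2 * n))%:R.
  rewrite -mulr_natl -(mulr_natr ((#|F|^n)%:R)) -natrM; congr (_ * _%:R).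
  by rewrite -expnD addnn -mul2n mulnC.
rewrite natrM in Kpos.
by rewrite mulrBr mulVf ?gt_eqF.
Qed.

Lemma qn_eq : ((#|F| ^ (2 * n))%:R : R) = (#|F|%:R ^+ n) ^+ 2.
Proof. by rewrite -exprM mulnC natrX. Qed.

Lemma ns_succ_bound (Z : nsbox R F n m) : (0 < m)%N ->
  (1 - nserr Z) * m%:R <= (#|F|%:R : R) ^+ n.
Proof.
move=> m0.
have hP : forall w th g,
   \sum_x \sum_v box Z (w, th) (chan_out x g th, g) x v = 1.
  move=> w th g; under eq_bigr do rewrite (box_ns_u Z _ _ (th, g)).
  exact: box_sum1.
rewrite /nserr (err_succ (P := fun w th g x v => box Z (w, th) (chan_out x g th, g) x v)) //.
set T := \sum_w _.
pose w0 : 'I_m := Ordinal m0.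
have T1 : T <= \sum_w \sum_(th : B) \sum_(g : B) \sum_(x : B) \sum_(u : B)
     box Z (w0, th) (chan_out x g th, g) u w.
  apply: ler_sum => w _; apply: ler_sum => th _; apply: ler_sum => g _;
  apply: ler_sum => x _.
  rewrite -(box_ns_v Z (w, th)).
  apply: (@term_le_sum _ B (fun u => box Z (w, th) (chan_out x g th, g) u w) x) => u; exact: box_ge0.
have T2 : \sum_w \sum_(th : B) \sum_(g : B) \sum_(x : B) \sum_(u : B)
     box Z (w0, th) (chan_out x g th, g) u w = (#|F|%:R ^+ n) ^+ 3.
  rewrite exchange_big.
  under eq_bigr do rewrite exchange_big.
  under eq_bigr do under eq_bigr do rewrite exchange_big.
  under eq_bigr do under eq_bigr do under eq_bigr do rewrite exchange_big box_sum1.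
  rewrite !sum_cst mulr1 !card_ffun !card_ord natrX.
  by rewrite !exprS expr0 mulr1 mulrA.

have q0 : (0 < #|F|)%N by apply/card_gt0P; exists 0.
have qn0 : (0:R) < #|F|%:R ^+ n by rewrite exprn_gt0 // ltr0n.
have hT : T <= (#|F|%:R ^+ n) ^+ 3.
  by rewrite (le_trans T1) // T2.
have -> : (1 - (1 - (m%:R * (#|F| ^ (2 * n))%:R)^-1 * T)) * m%:R =
   T / (#|F|%:R ^+ n) ^+ 2.
  rewrite qn_eq; field; rewrite pnatr_eq0 -lt0n m0 /= expf_neq0 // gt_eqF //.
  by rewrite ltr0n.
rewrite ler_pdivrMr ?exprn_gt0 //.
  by rewrite ltr0n.
Qed.
End Chan.

Section NSach.
Variables (R : realType) (F : finFieldType) (n : nat).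
Local Notation B := (blk F n).
Local Notation N := #|B|.

Lemma enum_val_eq (v : 'I_N) (b : B) : (enum_val v == b) = (v == enum_rank b).
Proof.
by apply/eqP/eqP => [<-|->]; [rewrite enum_valK | rewrite enum_rankK].
Qed.

Definition nsZ (s : 'I_N * B) (t : B * B) (x : B) (v : 'I_N) : R :=
  (N%:R)^-1 * ((enum_val v == [ffun i => enum_val s.1 i + t.1 i - x i - t.2 i * s.2 i])%:R).

Lemma N_gt0 : (0 < N)%N.
Proof. by apply/card_gt0P; exists [ffun => 0]. Qed.

Lemma nsZ_ge0 s t u v : 0 <= nsZ s t u v.
Proof. by rewrite /nsZ mulr_ge0 // invr_ge0. Qed.

Lemma nsZ_v s t u : \sum_v nsZ s t u v = (N%:R)^-1.
Proof.
rewrite /nsZ -mulr_sumr.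
under eq_bigr do rewrite enum_val_eq.
by rewrite sum_ind1 mulr1.
Qed.

Lemma nsZ_sum1 s t : \sum_u \sum_v nsZ s t u v = 1.
Proof.
under eq_bigr do rewrite nsZ_v.
rewrite sum_cst mulfV // pnatr_eq0 -lt0n; exact: N_gt0.
Qed.

Lemma nsZ_u s t t' u : \sum_v nsZ s t u v = \sum_v nsZ s t' u v.
Proof. by rewrite !nsZ_v. Qed.

Lemma nsZ_u1 s t v : \sum_u nsZ s t u v = (N%:R)^-1.
Proof.
rewrite /nsZ -mulr_sumr.
have e : forall u : B,
    (enum_val v == [ffun i => enum_val s.1 i + t.1 i - u i - t.2 i * s.2 i]) =
    (u == [ffun i => enum_val s.1 i + t.1 i - t.2 i * s.2 i - enum_val v i]).
  move=> u; apply/eqP/eqP => h; apply/ffunP => i;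
  have := congr1 (fun f : B => f i) h; rewrite !ffunE => ->; ring.
under eq_bigr do rewrite e.
by rewrite sum_ind1 mulr1.
Qed.

Lemma nsZ_v' s s' t v : \sum_u nsZ s t u v = \sum_u nsZ s' t u v.
Proof. by rewrite !nsZ_u1. Qed.

Definition nsbox0 : nsbox R F n N :=
  NSBox nsZ_ge0 nsZ_sum1 nsZ_u nsZ_v'.

Lemma nsbox0_err : nserr nsbox0 = 0.
Proof.
rewrite /nserr big1 ?mulr0 // => w _; rewrite big1 // => th _.
rewrite big1 // => g _; rewrite big1 // => x _; rewrite big1 // => v vw.
rewrite /= /nsZ /=.
have -> : [ffun i => enum_val w i + chan_out x g th i - x i - g i * th i] = enum_val w.
  by apply/ffunP => i; rewrite !ffunE; ring.
by rewrite enum_val_eq enum_valK (negbTE vw) mulr0.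
Qed.

Definition cs0 : cscheme R F n 1.
refine (@CScheme R F n 1 (fun w th x => (x == th)%:R) (fun y g v => 1) _ _ _ _).
- by move=> w th x; rewrite ler0n.
- by move=> w th; rewrite sum_ind1.
- by move=> y g v.
- by move=> y g; rewrite sum_cst card_ord mulr1.
Defined.

Lemma cs0_err : cerr cs0 = 0.
Proof.
rewrite /cerr big1 ?mulr0 // => w _; rewrite big1 // => th _.
rewrite big1 // => g _; rewrite big1 // => x _; rewrite big1 // => v vw.
by move: vw; rewrite (ord1 v) (ord1 w) eqxx.
Qed.
End NSach.

Section Gen2.
Variable R : realFieldType.

Lemma sum_ind1r (T : finType) (a : T) : \sum_y ((a == y)%:R : R) = 1.
Proof. by under eq_bigr do rewrite eq_sym; exact: sum_ind1. Qed.

Lemma sum_sq (P Y : finType) (a : P -> R) (f : P -> Y) :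
  \sum_y (\sum_p a p * (f p == y)%:R)^+2 =
  \sum_p \sum_p' a p * a p' * (f p == f p')%:R.
Proof.
transitivity (\sum_y \sum_p \sum_p' a p * a p' * ((f p == y)%:R * (f p' == y)%:R)).
  apply: eq_bigr => y _; rewrite expr2 mulr_suml; apply: eq_bigr => p _.
  rewrite mulr_sumr; apply: eq_bigr => p' _; ring.
rewrite exchange_big; apply: eq_bigr => p _; rewrite exchange_big; apply: eq_bigr => p' _.
by rewrite -mulr_sumr sum_ind eq_sym.
Qed.

Lemma flat3 (I J K : finType) (f : I -> J -> K -> R) :
  \sum_i \sum_j \sum_k f i j k = \sum_(p : I * (J * K)) f p.1 p.2.1 p.2.2.
Proof.
under eq_bigr do rewrite pair_bigA.
by rewrite pair_bigA.
Qed.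

Lemma CS3 (I J K : finType) (a b : I -> J -> K -> R) :
  (\sum_i \sum_j \sum_k a i j k * b i j k)^+2 <=
  (\sum_i \sum_j \sum_k a i j k ^+2) * (\sum_i \sum_j \sum_k b i j k ^+2).
Proof.
rewrite !flat3.
exact: (CS (fun p : I * (J * K) => a p.1 p.2.1 p.2.2) (fun p => b p.1 p.2.1 p.2.2)).
Qed.
End Gen2.

Section Count.
Variables (R : realFieldType) (F : finFieldType) (n : nat).

Lemma count1 (x x' t t' : F) :
  \sum_a ((x + a * t == x' + a * t')%:R : R) <= if t == t' then #|F|%:R else 1.
Proof.
have [<-|ne] := eqVneq t t'.
  rewrite -[X in _ <= X]mulr1 -sum_cst; apply: ler_sum => a _.
  by case: (_ == _); rewrite ?ler01 ?lexx.
have ne' : t - t' != 0 by rewrite subr_eq0.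
have e : forall a, (x + a * t == x' + a * t') = (a == (x' - x) / (t - t')).
  move=> a; apply/eqP/eqP => h.
    have h2 : a * (t - t') = x' - x.
      rewrite (_ : a * (t - t') = (x + a * t) - x - a * t'); last by ring.
      rewrite h; ring.
    by rewrite -h2 mulfK.
  rewrite h; field; exact: ne'.
under eq_bigr do rewrite e.
by rewrite sum_ind1.
Qed.

Lemma count_g (x x' th th' : blk F n) :
  \sum_(g : blk F n)
     ((chan_out x g th == chan_out x' g th')%:R : R) <=
  \prod_i (if th i == th' i then #|F|%:R else 1).
Proof.
have -> : \sum_(g : blk F n) ((chan_out x g th == chan_out x' g th')%:R : R) =
    \sum_(g : blk F n) \prod_i ((x i + g i * th i == x' i + g i * th' i)%:R : R).
  by apply: eq_bigr => g _; rewrite ffun_eq_prod; apply: eq_bigr => i _; rewrite !ffunE.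
rewrite -(bigA_distr_bigA (fun i a => ((x i + a * th i == x' i + a * th' i)%:R : R))).
apply: ler_prod => i _; rewrite sumr_ge0 //= ?count1 // => a _; exact: ler0n.
Qed.

Lemma sum_h (th : {ffun 'I_n -> F}) :
  \sum_(th' : {ffun 'I_n -> F}) \prod_i ((if th i == th' i then #|F|%:R else 1) : R) <=
  (2 * #|F|%:R) ^+ n.
Proof.
rewrite -(bigA_distr_bigA (fun i a => ((if th i == a then #|F|%:R else 1) : R))).
have -> : (2 * #|F|%:R : R) ^+ n = \prod_(i : 'I_n) (2 * #|F|%:R) by rewrite prodr_const card_ord.
apply: ler_prod => i _; apply/andP; split.
  by apply: sumr_ge0 => a _; case: (_ == _); rewrite ?ler0n ?ler01.
apply: (@le_trans _ _ (\sum_a (#|F|%:R * (th i == a)%:R + 1))).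
  apply: ler_sum => a _; case: (_ == _); rewrite ?mulr1 ?mulr0 ?add0r //.
  by rewrite lerDl ler01.
rewrite big_split /= -mulr_sumr.
by rewrite sum_ind1r mulr1 sum_cst mulr1; lra.
Qed.
End Count.

Section Classical.
Variables (R : realType) (F : finFieldType) (n m : nat).
Variable S : cscheme R F n m.
Local Notation B := (blk F n).
Local Notation q := (#|F|%:R : R).

Definition cc (w : 'I_m) (g y : B) : R :=
  \sum_(p : B * B) enc S w p.1 p.2 * (chan_out p.2 g p.1 == y)%:R.

Lemma T_eq : \sum_w \sum_(th : B) \sum_(g : B) \sum_(x : B)
    enc S w th x * dec S (chan_out x g th) g w =
  \sum_w \sum_(g : B) \sum_(y : B) dec S y g w * cc w g y.
Proof.
apply: eq_bigr => w _; rewrite exchange_big; apply: eq_bigr => g _.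
symmetry.
transitivity (\sum_(y : B) \sum_(p : B * B)
   enc S w p.1 p.2 * ((chan_out p.2 g p.1 == y)%:R * dec S y g w)).
  apply: eq_bigr => y _; rewrite /cc mulr_sumr; apply: eq_bigr => p _; ring.
rewrite exchange_big.
under eq_bigr do rewrite -mulr_sumr sum_ind.
by rewrite -(pair_bigA _ (fun th x => enc S w th x * dec S (chan_out x g th) g w)).
Qed.

Lemma dec_le1 y g v : dec S y g v <= 1.
Proof.
rewrite -(dec_sum1 S y g).
by apply: (@term_le_sum _ 'I_m (fun v => dec S y g v) v) => u; exact: dec_ge0.
Qed.

Lemma A_bound : \sum_w \sum_(g : B) \sum_(y : B) (dec S y g w)^+2 <= (q ^+ n)^+2.
Proof.
apply: (@le_trans _ _ (\sum_w \sum_(g : B) \sum_(y : B) dec S y g w)).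
  apply: ler_sum => w _; apply: ler_sum => g _; apply: ler_sum => y _.
  rewrite expr2 -[X in _ <= X]mulr1; apply: ler_wpM2l; [exact: dec_ge0 | exact: dec_le1].
rewrite exchange_big; under eq_bigr do rewrite exchange_big.
under eq_bigr do under eq_bigr do rewrite dec_sum1.
by rewrite !sum_cst mulr1 card_ffun card_ord natrX expr2.
Qed.

Lemma B_bound_w w : \sum_(g : B) \sum_(y : B) cc w g y ^+2 <= q ^+ n * (2 * q) ^+ n.
Proof.
rewrite /cc.
under eq_bigr do rewrite (sum_sq (fun p : B * B => enc S w p.1 p.2) (fun p => chan_out p.2 _ p.1)).
rewrite exchange_big; under eq_bigr do rewrite exchange_big.
under eq_bigr do under eq_bigr do rewrite -mulr_sumr.
apply: (@le_trans _ _ (\sum_(p : B * B) \sum_(p' : B * B) enc S w p.1 p.2 * enc S w p'.1 p'.2 *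
   \prod_i (if p.1 i == p'.1 i then q else 1))).
  apply: ler_sum => p _; apply: ler_sum => p' _; apply: ler_wpM2l.
    by rewrite mulr_ge0 // enc_ge0.
  exact: count_g.
apply: (@le_trans _ _ (\sum_(p : B * B) enc S w p.1 p.2 * (2 * q) ^+ n)).
  apply: ler_sum => p _.
  under eq_bigr do rewrite -mulrA.
  rewrite -mulr_sumr; apply: ler_wpM2l; first exact: enc_ge0.
  rewrite -(pair_bigA _ (fun th x => enc S w th x * \prod_i (if p.1 i == th i then q else 1))).
  under eq_bigr do rewrite -mulr_suml enc_sum1 mul1r.
  exact: sum_h.
rewrite -mulr_suml -(pair_bigA _ (fun th x => enc S w th x)).
under eq_bigr do rewrite enc_sum1.
by rewrite sum_cst mulr1 card_ffun card_ord natrX.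
Qed.

Lemma T_bound : (\sum_w \sum_(th : B) \sum_(g : B) \sum_(x : B)
    enc S w th x * dec S (chan_out x g th) g w) ^+ 2 <=
  (q ^+ n) ^+ 4 * m%:R * 2 ^+ n.
Proof.
rewrite T_eq.
apply: le_trans (CS3 (fun w g y => dec S y g w) (fun w g y => cc w g y)) _.
have A0 : 0 <= \sum_w \sum_(g : B) \sum_(y : B) (dec S y g w)^+2.
  by do 3! (apply: sumr_ge0 => ? _); exact: sqr_ge0.
have Bb : \sum_w \sum_(g : B) \sum_(y : B) cc w g y ^+2 <= m%:R * (q ^+ n * (2 * q) ^+ n).
  have -> : m%:R * (q ^+ n * (2 * q) ^+ n) = \sum_(w : 'I_m) (q ^+ n * (2 * q) ^+ n).
    by rewrite sum_cst card_ord.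
  by apply: ler_sum => w _; exact: B_bound_w.
apply: le_trans (ler_pM A0 _ A_bound Bb) _.
  by do 3! (apply: sumr_ge0 => ? _); exact: sqr_ge0.
have E : (q ^+ n) ^+ 2 * (m%:R * (q ^+ n * (2 * q) ^+ n)) = (q ^+ n) ^+ 4 * m%:R * 2 ^+ n.
  by rewrite exprMn; ring.
by rewrite E.
Qed.

Lemma cl_succ_bound : (0 < m)%N -> (1 - cerr S) ^+ 2 * m%:R <= 2 ^+ n.
Proof.
move=> m0.
have hP : forall w th g,
   \sum_x \sum_v enc S w th x * dec S (chan_out x g th) g v = 1.
  move=> w th g; under eq_bigr do rewrite -mulr_sumr dec_sum1 mulr1.
  exact: enc_sum1.
rewrite /cerr (err_succ (P := fun w th g x v => enc S w th x * dec S (chan_out x g th) g v)) //.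
have := T_bound.
set T := \sum_w _.
move=> hT.
have q0 : (0 < #|F|)%N by apply/card_gt0P; exists 0.
have qn0 : (0:R) < q ^+ n by rewrite exprn_gt0 // ltr0n.
have mr0 : (0:R) < m%:R by rewrite ltr0n.
have -> : (1 - (1 - (m%:R * (#|F| ^ (2 * n))%:R)^-1 * T)) ^+ 2 * m%:R =
   T ^+ 2 / ((q ^+ n) ^+ 4 * m%:R).
  rewrite qn_eq; field; rewrite gt_eqF //= expf_neq0 // gt_eqF //.
  by rewrite ltr0n.
rewrite ler_pdivrMr ?mulr_gt0 ?exprn_gt0 //.
- by apply: le_trans hT _; rewrite mulrC.
all: by rewrite ltr0n.
Qed.
End Classical.

Lemma log2_ge0 {R : realType} (x : R) : 1 <= x -> 0 <= log2 x.
Proof. by move=> x1; rewrite /log2 divr_ge0 // ln_ge0 // ler1n. Qed.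

Lemma log2_2X {R : realType} k : log2 ((2 ^ k)%:R : R) = k%:R.
Proof. by rewrite natrX log2X // log2_2. Qed.

Lemma card_F_gt0 (F : finFieldType) : (0 < #|F|)%N.
Proof. by apply/card_gt0P; exists 0. Qed.

Lemma ns_cap (R : realType) (F : finFieldType) : ns_capacity R F = log2 (#|F|%:R : R).
Proof.
have q1 : (1:R) <= #|F|%:R by rewrite ler1n card_F_gt0.
have ub : ubound [set r : R | ns_achievable F r] (log2 #|F|%:R).
  move=> r [mm [Z [m0 [errc [l [ratec rl]]]]]].
  apply: le_trans rl _.
  apply: (@rate_bound R 1 _ _ _ _ q1 m0 errc ratec) => n.
  rewrite expr1; exact: ns_succ_bound.
have mem : ns_achievable F (log2 (#|F|%:R : R)).
  exists (fun n => #|blk F n|), (fun n => nsbox0 R F n).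
  split; first by move=> n; exact: N_gt0.
  split.
    have -> : (fun n => nserr (nsbox0 R F n)) = (fun _ => 0).
      by apply: funext => n; exact: nsbox0_err.
    exact: cvg_cst.
  exists (log2 (#|F|%:R : R)); split => //.
  apply: cvg_near_cst; near=> n.
  have n1 : (0 < n)%N by near: n; exact: nbhs_infty_gt.
  rewrite /rate card_blk natrX log2X ?ltr0n ?card_F_gt0 // -(mulr_natr (log2 (#|F|%:R : R))) mulfK //.
  by rewrite pnatr_eq0 -lt0n.
apply/eqP; rewrite eq_le; apply/andP; split.
  by apply: ge_sup => //; exists (log2 (#|F|%:R : R)).
by apply: (ub_le_sup _ mem); exists (log2 (#|F|%:R : R)).
Unshelve. all: by end_near.
Qed.

Lemma cap0 (R : realType) (F : finFieldType) : c_achievable F (0 : R).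
Proof.
exists (fun _ => 1%N), (fun n => cs0 R F n).
split => //; split.
  have -> : (fun n => cerr (cs0 R F n)) = (fun _ => 0).
    by apply: funext => n; exact: cs0_err.
  exact: cvg_cst.
exists 0; split => //.
have -> : (fun n => rate n 1 : R) = (fun _ => 0).
  by apply: funext => n; rewrite /rate /log2 ln1 !mul0r.
exact: cvg_cst.
Qed.

Lemma cap_ub (R : realType) (F : finFieldType) : ubound [set r : R | c_achievable F r] 1.
Proof.
move=> r [mm [S [m0 [errc [l [ratec rl]]]]]].
apply: le_trans rl _.
rewrite -(@log2_2 R).
apply: (@rate_bound R 2 _ _ _ _ _ m0 errc ratec) => //.
  by rewrite ler1n.
move=> n; exact: cl_succ_bound.
Qed.

Lemma cap_le1 (R : realType) (F : finFieldType) : capacity R F <= 1.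
Proof. by apply: ge_sup; [exists 0; exact: cap0 | exact: cap_ub]. Qed.

Lemma cap_ge0 (R : realType) (F : finFieldType) : 0 <= capacity R F.
Proof. by apply: (ub_le_sup _ (cap0 R F)); exists 1; exact: cap_ub. Qed.

Lemma log2_big (R : realType) (F : finFieldType) k : (2 ^ k <= #|F|)%N ->
  (k%:R : R) <= log2 (#|F|%:R : R).
Proof.
move=> hk; rewrite -(@log2_2X R); apply: log2_ler.
  by rewrite ltr0n expn_gt0.
by rewrite ler_nat.
Qed.

Unset Implicit Arguments.

Theorem theorem10 (R : realType) :
  (forall F : finFieldType, ns_capacity R F = log2 (#|F|%:R : R)) /\
  (forall eps : R, 0 < eps -> exists Q : nat, forall F : finFieldType,
      (Q <= #|F|)%N -> capacity R F / log2 (#|F|%:R : R) <= eps) /\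
  (forall M : R, exists Q : nat, forall F : finFieldType,
      (Q <= #|F|)%N -> M * capacity R F <= ns_capacity R F).
Proof.
split; first exact: ns_cap.
split.
  move=> eps eps0.
  have hb := archi_boundP (normr_ge0 (eps^-1)).
  exists (2 ^ Num.bound `|eps^-1|)%N => F hQ.
  have lq := log2_big R hQ.
  have einv : eps^-1 <= `|eps^-1| by exact: ler_norm.
  have L0 : 0 < log2 (#|F|%:R : R).
    apply: lt_le_trans lq; apply: le_lt_trans hb; exact: normr_ge0.
  rewrite ler_pdivrMr //.
  apply: le_trans (cap_le1 R F) _.
  have h1 : eps^-1 <= log2 (#|F|%:R : R) by lra.
  have := ler_wpM2l (ltW eps0) h1.
  by rewrite mulfV ?gt_eqF // mulrC.
move=> M.
have hb := archi_boundP (normr_ge0 M).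
exists (2 ^ Num.bound `|M|)%N => F hQ.
have lq := log2_big R hQ.
rewrite ns_cap.
have c0 := cap_ge0 R F; have c1 := cap_le1 R F.
have hM : M <= `|M| by exact: ler_norm.
have L0 : 0 <= log2 (#|F|%:R : R).
  apply: le_trans lq; exact: ler0n.
have [M0|M0] := lerP M 0.
  apply: le_trans L0; exact: mulr_le0_ge0.
apply: (@le_trans _ _ M).
  by rewrite -[X in _ <= X]mulr1 ler_wpM2l // ltW.
lra.
Qed.
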